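(* Let $X$ be a compact metric space with metric $d$, $T:X\to X$ continuous, and $\Phi=\{\phi_n\}_{n\ge1}$ a supadditive potential on $X$. Fix a positive integer $k$. Then there is a constant $C$ such that for every $\eta>0$ there exists $\epsilon_0>0$ such that for every $0<\epsilon<\epsilon_0$, every $n\ge1$ and every $x\in X$, \[ \phi_n(x)\ge\sup_{y\in B_n(x,\epsilon)}\sum_{i=0}^{n-1}\frac1k\phi_k(T^iy)-n\eta-C. \]
   Context: A supadditive potential is a sequence of continuous $\phi_n:X\to\mathbb{R}$ with $\phi_{n+m}(x)\ge\phi_n(x)+\phi_m(T^nx)$ for all $x\in X$, $n,m\ge1$. $B_n(x,\epsilon)=\{y\in X:d(T^ix,T^iy)<\epsilon\ \text{for}\ 0\le i\le n-1\}$. *)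

(* Defs.v *)
From HB Require Import structures.
From mathcomp Require Import all_boot all_order all_algebra.
From mathcomp Require Import all_classical all_reals all_analysis.
Set Implicit Arguments. Unset Strict Implicit. Unset Printing Implicit Defensive.
Import Order.TTheory GRing.Theory Num.Theory.
Import numFieldTopology.Exports numFieldNormedType.Exports.
Local Open Scope classical_set_scope.
Local Open Scope ring_scope.

Definition supadditive_potential {R : realType} {X : topologicalType}
  (T : X -> X) (phi : nat -> X -> R) : Prop :=
  (forall n, (1 <= n)%N -> continuous (phi n)) /\
  (forall (n m : nat) (x : X), (1 <= n)%N -> (1 <= m)%N ->
     phi n x + phi m (iter n T x) <= phi (n + m)%N x).

Definition bowen_ball {R : realType} {X : metricType R}
  (T : X -> X) (n : nat) (x : X) (eps : R) : set X :=
  [set y | forall i : nat, (i < n)%N -> mdist (iter i T x) (iter i T y) < eps].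

(* Main.v *)
Require Import Defs.
From HB Require Import structures.
From mathcomp Require Import all_boot all_order all_algebra.
From mathcomp Require Import all_classical all_reals all_analysis.
Import Order.TTheory GRing.Theory Num.Theory.
Import numFieldTopology.Exports numFieldNormedType.Exports.
Local Open Scope classical_set_scope.
Local Open Scope ring_scope.
From mathcomp Require Import lra zify.
Lemma ptw (R : realType) (X : metricType R) (f : X -> R) (x : X) : continuous f ->
  forall e, 0 < e -> exists2 d, 0 < d & forall y, mdist x y < d -> `|f x - f y| < e.
Proof.
move=> cf e e0.
have H : \forall t \near x, `|f x - f t| < e by exact: (proj1 (cvgrPdist_lt _ _) (cf x) e e0).
have [d d0 H2] := proj1 (metricType_numDomainType.nbhs_mdistP x _) H.
exists d => // y xy; exact: H2.
Qed.

Lemma unifc (R : realType) (X : metricType R) (f : X -> R) :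
  compact [set: X] -> continuous f -> forall e, 0 < e ->
  exists2 d, 0 < d & forall a b, mdist a b < d -> `|f a - f b| < e.
Proof.
move=> cX cf e e0.
have nc := proj1 (compact_near_coveringP _) cX.
pose P (d : R) (z : X) := forall w, mdist z w < d -> `|f z - f w| < e.
have Hc : \forall d \near (0:R)^'+, [set: X] `<=` P d.
  apply: nc => x _.
  have [del del0 Hx] := @ptw R X f x cf (e/2) ltac:(by rewrite divr_gt0).
  near=> z d.
  move=> w zw.
  have xz : mdist x z < del / 2 by near: z; apply/(proj2 (metricType_numDomainType.nbhs_mdistP x _)); exists (del/2) => //=; by rewrite divr_gt0.
  have dd : d < del / 2 by near: d; apply: nbhs_right_lt; by rewrite divr_gt0.
  have h1 : `|f x - f z| < e/2 by apply: Hx; rewrite (lt_le_trans xz)// ler_pdivrMr// ler_peMr// ?ler1n// ltW.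
  have h2 : `|f x - f w| < e/2.
    apply: Hx; rewrite (le_lt_trans (metric_triangle x z w))//.
    by rewrite [del]splitr ltrD// (lt_trans zw).
  rewrite (le_lt_trans (ler_distD (f x) _ _))// distrC [e]splitr ltrD//.
near (0:R)^'+ => d.
exists d; first by near: d; apply: nbhs_right_gt.
move=> a b ab. exact: (near Hc d).
Unshelve. all: end_near. Qed.
Lemma bnd (R : realType) (X : metricType R) (f : X -> R) :
  compact [set: X] -> continuous f -> exists M, 0 <= M /\ forall z, `|f z| <= M.
Proof.
move=> cX cf.
have cK := continuous_compact (@continuous_subspaceT _ _ [set: X] f cf) cX.
have B := compact_bounded cK.
move: B => [M [Mr HM]].
exists (`|M| + 1); split; first by rewrite addr_ge0.
move=> z; apply: (HM (`|M| + 1)).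
  rewrite (le_lt_trans (real_ler_norm Mr))// ltrDl//.
by exists z.
Qed.
Lemma blocks (R : realType) (k : nat) (G : nat -> R) p :
  \sum_(0 <= i < p * k) G i = \sum_(0 <= l < p) \sum_(0 <= j < k) G (l * k + j)%N.
Proof.
elim: p => [|p IH]; first by rewrite mul0n !big_geq.
rewrite big_nat_recr //= -IH mulSnr (big_cat_nat _ (leq_addr _ _)) //=.
congr (_ + _).
rewrite -{1}(add0n (p*k)%N) big_addn addKn.
by apply: eq_bigr => j _; rewrite addnC.
Qed.
Section Comb.
Variables (R : realType) (X : Type) (T : X -> X) (phi : nat -> X -> R) (k : nat) (B : R).
Hypothesis k0 : (0 < k)%N.
Hypothesis Hsup : forall (n m : nat) (x : X), (1 <= n)%N -> (1 <= m)%N ->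
     phi n x + phi m (iter n T x) <= phi (n + m)%N x.
Hypothesis B0 : 0 <= B.
Hypothesis HB : forall m z, (1 <= m)%N -> (m <= 2 * k)%N -> `|phi m z| <= B.

Lemma lowB m z : (1 <= m)%N -> (m <= 2 * k)%N -> - B <= phi m z.
Proof. by move=> h1 h2; have := HB m z h1 h2; rewrite ler_norml => /andP[]. Qed.
Lemma upB m z : (1 <= m)%N -> (m <= 2 * k)%N -> phi m z <= B.
Proof. by move=> h1 h2; have := HB m z h1 h2; rewrite ler_norml => /andP[]. Qed.

Lemma L0 p y : (1 <= p)%N ->
  \sum_(0 <= l < p) phi k (iter (l * k) T y) <= phi (p * k) y.
Proof.
elim: p => [//|p IH] _.
rewrite big_nat_recr //=.
case: p IH => [|p] IH; first by rewrite big_geq // add0r mul1n.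
rewrite [(p.+2 * k)%N]mulSnr; apply: (le_trans _ (Hsup (p.+1 * k) k y _ _)); rewrite ?muln_gt0 ?k0 //.
by rewrite lerD2r; exact: IH.
Qed.

Lemma Lsh n j x : (j < n)%N -> (j < k)%N ->
  - B + phi (n - j) (iter j T x) <= phi n x.
Proof.
move=> jn jk; case: j jn jk => [|j] jn jk.
  by rewrite subn0 /= gerDr oppr_le0.
have := Hsup j.+1 (n - j.+1) x (isT : (1 <= j.+1)%N) (_ : (1 <= n - j.+1)%N).
rewrite subnKC; last exact: ltnW.
move=> H; apply: le_trans (H _); last by rewrite subn_gt0.
by rewrite lerD2r lowB //; lia.
Qed.
Lemma Lj n x j : (2 * k <= n)%N -> (j < k)%N ->
  \sum_(0 <= l < (n %/ k).-1) phi k (iter (l * k + j) T x) - (B + B) <= phi n x.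
Proof.
move=> hn jk.
set p := (n %/ k).-1.
have hq : (2 <= n %/ k)%N by rewrite leq_divRL.
have hp : (n %/ k = p.+1)%N by rewrite /p prednK //; lia.
have hr := ltn_pmod n k0.
have hpk : (p * k + k + n %% k = n)%N by rewrite -mulSnr -hp -divn_eq.
have p1 : (1 <= p)%N by lia.
have P1 : (1 <= p * k)%N by rewrite muln_gt0 p1.
set y := iter j T x.
have c1 : (j < n)%N by lia.
have c2 : (1 <= n - j - p * k)%N by lia.
have c3 : (n - j - p * k <= 2 * k)%N by lia.
have e1 := Lsh n j x c1 jk.
have e2 := Hsup (p * k) (n - j - p * k) y P1 c2.
have e3 := L0 p y p1.
have e4 := lowB (n - j - p * k) (iter (p * k) T y) c2 c3.
have e5 : (p * k + (n - j - p * k) = n - j)%N by lia.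
rewrite e5 in e2.
have -> : \sum_(0 <= l < p) phi k (iter (l * k + j) T x) = \sum_(0 <= l < p) phi k (iter (l * k) T y).
  by apply: eq_bigr => l _; rewrite /y iterD.
move: e1 e2 e3 e4; rewrite -/y.
lra.
Qed.

Lemma Lmain n x : (1 <= n)%N ->
  \sum_(0 <= i < n) phi k (iter i T x) <= k%:R * phi n x + k%:R * (4 * B).
Proof.
move=> n1.
have k1 : (1 <= k)%N by [].
have kk : (k <= 2 * k)%N by lia.
have F_le : forall a b, \sum_(a <= i < b) phi k (iter i T x) <= (b - a)%:R * B.
  move=> a b; rewrite mulr_natl -sumr_const_nat; apply: ler_sum => i _; exact: upB.
have kB : 0 <= k%:R * B by rewrite mulr_ge0.
case: (ltnP n (2 * k)) => hn.
  have h1 := lowB n x n1 (ltnW hn).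
  have h2 : (n - 0)%:R * B <= (2 * k)%:R * B by rewrite ler_wpM2r // ler_nat; lia.
  have h3 := F_le 0%N n.
  rewrite natrM in h2.
  have h4 : k%:R * (- B) <= k%:R * phi n x by rewrite ler_wpM2l.
  move: h2 h3 h4 kB; lra.
set p := (n %/ k).-1.
have hq : (2 <= n %/ k)%N by rewrite leq_divRL.
have hp : (n %/ k = p.+1)%N by rewrite /p prednK //; lia.
have hr := ltn_pmod n k0.
have hpk : (p * k + k + n %% k = n)%N by rewrite -mulSnr -hp -divn_eq.
rewrite (@big_cat_nat _ _ _ (p * k)) //=; last by lia.
have h2 : (n - p * k)%:R * B <= (2 * k)%:R * B by rewrite ler_wpM2r // ler_nat; lia.
have h3 := F_le (p * k)%N n.
rewrite natrM in h2.
rewrite blocks exchange_big_nat /=.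
have h4 : \sum_(0 <= j < k) (\sum_(0 <= l < p) phi k (iter (l * k + j) T x) - (B + B))
   <= \sum_(0 <= j < k) phi n x.
  by apply: ler_sum_nat => j /andP[_ jk]; exact: (Lj n x j hn jk).
rewrite sumrB !sumr_const_nat subn0 -[phi n x *+ k]mulr_natl -[(B + B) *+ k]mulr_natl in h4.
move: h2 h3 h4 kB; lra.
Qed.
End Comb.

Lemma bndN (R : realType) (X : metricType R) (phi : nat -> X -> R) (N : nat) :
  compact [set: X] -> (forall n, (1 <= n)%N -> continuous (phi n)) ->
  exists B, 0 <= B /\ forall m z, (1 <= m)%N -> (m <= N)%N -> `|phi m z| <= B.
Proof.
move=> cX cphi; elim: N => [|N [B [B0 HB]]].
  by exists 0; split => // m z h1 h2; lia.
have [M [M0 HM]] := @bnd _ _ _ cX (cphi N.+1 isT).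
exists (B + M); split; first by rewrite addr_ge0.
move=> m z h1; rewrite leq_eqVlt => /orP[/eqP ->|h2].
  by rewrite (le_trans (HM z)) // lerDr.
by rewrite (le_trans (HB m z h1 h2)) // lerDl.
Qed.

Theorem mainTheorem13 (R : realType) (X : metricType R) (T : X -> X)
  (phi : nat -> X -> R) (k : nat) :
  compact [set: X] ->
  continuous T ->
  supadditive_potential T phi ->
  (0 < k)%N ->
  exists C : R, forall eta : R, 0 < eta ->
    exists eps0 : R, 0 < eps0 /\
      forall eps : R, 0 < eps -> eps < eps0 ->
      forall (n : nat) (x : X), (1 <= n)%N ->
        sup [set (\sum_(0 <= i < n) (k%:R)^-1 * phi k (iter i T y))
             | y in bowen_ball T n x eps] - n%:R * eta - C <= phi n x.
Proof.
move=> cX cT [cphi Hsup] k0.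
have [B [B0 HB]] := @bndN _ _ phi (2 * k)%N cX cphi.
have Lm := @Lmain _ _ T phi k B k0 Hsup B0 HB.
exists (4 * B) => eta eta0.
have kR : 0 < k%:R :> R by rewrite ltr0n.
have [d d0 Hd] := @unifc _ _ _ cX (cphi k k0) _ (mulr_gt0 kR eta0).
exists d; split => // eps eps0 epsd n x n1.
suff : sup [set (\sum_(0 <= i < n) (k%:R)^-1 * phi k (iter i T y))
             | y in bowen_ball T n x eps] <= phi n x + n%:R * eta + 4 * B by lra.
apply: ge_sup.
  exists (\sum_(0 <= i < n) (k%:R)^-1 * phi k (iter i T x)); exists x => //.
  by move=> i _; rewrite mdistxx.
move=> v [y yb <-].
have h1 : \sum_(0 <= i < n) (k%:R)^-1 * phi k (iter i T y) <=
          \sum_(0 <= i < n) ((k%:R)^-1 * phi k (iter i T x) + eta).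
  apply: ler_sum_nat => i /andP[_ ilt].
  have := Hd _ _ (lt_trans (yb i ilt) epsd).
  rewrite ltr_norml => /andP[ha _].
  rewrite -[leRHS](mulKf (lt0r_neq0 kR)) mulrDr mulrA mulfV ?lt0r_neq0 // mul1r.
  rewrite ler_wpM2l // ?invr_ge0 ?ltW //.
  lra.
rewrite big_split /= sumr_const_nat subn0 -[eta *+ n]mulr_natl in h1.
have h2 := Lm n x n1.
have h3 : (k%:R)^-1 * \sum_(0 <= i < n) phi k (iter i T x) <=
   (k%:R)^-1 * (k%:R * phi n x + k%:R * (4 * B)).
  by rewrite ler_wpM2l // invr_ge0 ltW.
rewrite mulrDr !mulrA mulVf ?lt0r_neq0 // !mul1r mulr_sumr in h3.
lra.
Qed.
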